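(* Every idempotent in $\overline{\square}_\vee$ splits in $\overline{\square}_\vee$: for every $A \in \overline{\square}_\vee$ and every morphism $f \colon A \to A$ with $ff = f$, there exist $B \in \overline{\square}_\vee$ and morphisms $s \colon B \to A$, $r \colon A \to B$ in $\overline{\square}_\vee$ with $rs = \mathrm{id}_B$ and $sr = f$.
   Context: $\mathbf{SLat}$ is the category of (join-)semilattices—sets with an associative, commutative, idempotent binary operation $\vee$—and homomorphisms preserving $\vee$ (not necessarily preserving bounds or meets). Each semilattice is a poset via $x\le y\iff x\vee y=y$. $\overline{\square}_\vee$ is the full subcategory of $\mathbf{SLat}$ on the finite inhabited semilattices whose induced poset is a distributive lattice. *)

(* Defs.v *)
From mathcomp Require Import all_boot.
Set Implicit Arguments. Unset Strict Implicit. Unset Printing Implicit Defensive.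

Definition is_slat (T : Type) (j : T -> T -> T) : Prop :=
  (forall x y z, j x (j y z) = j (j x y) z) /\
  (forall x y, j x y = j y x) /\
  (forall x, j x x = x).

Definition sle (T : Type) (j : T -> T -> T) (x y : T) : Prop := j x y = y.

Definition is_glb_op (T : Type) (j : T -> T -> T) (m : T -> T -> T) : Prop :=
  forall x y,
    sle j (m x y) x /\ sle j (m x y) y /\
    (forall z, sle j z x -> sle j z y -> sle j z (m x y)).

(* Objects of the category \overline{\square}_\vee: finite, inhabited
   semilattices whose induced poset is a distributive lattice
   (i.e. binary meets exist and meet distributes over join). *)
Definition is_fdlat (T : finType) (j : T -> T -> T) : Prop :=
  is_slat j /\ inhabited T /\
  exists m : T -> T -> T, is_glb_op j m /\
    (forall x y z, m x (j y z) = j (m x y) (m x z)).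

Definition slat_hom (A B : Type) (jA : A -> A -> A) (jB : B -> B -> B)
  (f : A -> B) : Prop :=
  forall x y, f (jA x y) = jB (f x) (f y).

(* Main.v *)
Require Import Defs.
From mathcomp Require Import all_boot.

Theorem mainTheorem6 (A : finType) (jA : A -> A -> A) (f : A -> A) :
  is_fdlat jA -> slat_hom jA jA f -> (forall x, f (f x) = f x) ->
  exists (B : finType) (jB : B -> B -> B) (s : B -> A) (r : A -> B),
    is_fdlat jB /\ slat_hom jB jA s /\ slat_hom jA jB r /\
    (forall b, r (s b) = b) /\ (forall a, s (r a) = f a).
Proof.
move=> [[jass [jcom jid]] [[a0] [m [mglb mdist]]]] fh ff.
pose B := {x : A | f x == x}.
have Bj : forall x y : B, f (jA (val x) (val y)) == jA (val x) (val y).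
  by move=> [x /eqP hx] [y /eqP hy] /=; rewrite fh hx hy.
have Br : forall a, f (f a) == f a by move=> a; rewrite ff.
pose jB (x y : B) : B := exist (fun z => f z == z) _ (Bj x y).
pose r (a : A) : B := exist (fun z => f z == z) _ (Br a).
have fv : forall x : B, f (val x) = val x by move=> [x hx]; apply/eqP.
exists B, jB, val, r.
have rs : forall b, r (val b) = b by move=> b; apply: val_inj => /=; apply: fv.
split; last split; last split; [| by [] | | by split].
- split.
    split; first by move=> x y z; apply: val_inj => /=; apply: jass.
    split; first by move=> x y; apply: val_inj => /=; apply: jcom.
    by move=> x; apply: val_inj => /=; apply: jid.
  split; first exact: (inhabits (r a0)).
  exists (fun x y => r (m (val x) (val y))); split.
    move=> x y; rewrite /sle; split; last split.
    + apply: val_inj => /=; have [h _] := mglb (val x) (val y).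
      by rewrite -{2}(fv x) -fh h fv.
    + apply: val_inj => /=; have [_ [h _]] := mglb (val x) (val y).
      by rewrite -{2}(fv y) -fh h fv.
    + move=> z hzx hzy; apply: val_inj => /=.
      have [_ [_ h]] := mglb (val x) (val y).
      have := h (val z).
      rewrite /sle => h'.
      have e1 : jA (val z) (val x) = val x by move/(congr1 val): hzx.
      have e2 : jA (val z) (val y) = val y by move/(congr1 val): hzy.
      by rewrite -{1}(fv z) -fh (h' e1 e2).
  move=> x y z; apply: val_inj => /=.
  by rewrite mdist fh.
- by move=> x y; apply: val_inj => /=; rewrite fh.
Qed.
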